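(* Let $p$ be a prime, $V$ a $4$-dimensional vector space over $\mathbb{F}_p$, $G=GL(V)$, and for $r=1,2,3$ let $\mathcal{L}_r$ be the set of $r$-dimensional subspaces of $V$. Let $\eta:\mathbb{Z}\mathcal{L}_2\to\mathbb{Z}\mathcal{L}_2$ be the $\mathbb{Z}$-linear map with $\eta(x)=\sum_{y\in\mathcal{L}_2,\ y\cap x=\{0\}} y$ for $x\in\mathcal{L}_2$; let $\phi:\mathbb{Z}\mathcal{L}_1\to\mathbb{Z}\mathcal{L}_2$ be given by $\phi(x)=\sum_{y\in\mathcal{L}_2,\ x\cap y=\{0\}}y$ for $x\in\mathcal{L}_1$; and let $\psi:\mathbb{Z}\mathcal{L}_3\to\mathbb{Z}\mathcal{L}_2$ be given by $\psi(x)=\sum_{y\in\mathcal{L}_2,\ x\cap y\neq y}y$ for $x\in\mathcal{L}_3$. Denote by $\overline{\eta},\overline{\phi},\overline{\psi}$ the induced maps on the corresponding $\mathbb{F}_p$-permutation modules $\mathbb{F}_p\mathcal{L}_r$. For $i\ge 0$ let $M_i=\{m\in\mathbb{Z}\mathcal{L}_2 : \eta(m)\in p^i\mathbb{Z}\mathcal{L}_2\}$ and let $\overline{M_i}=(M_i+p\mathbb{Z}\mathcal{L}_2)/p\mathbb{Z}\mathcal{L}_2\subseteq\mathbb{F}_p\mathcal{L}_2$. Let $\mathbf{1}=\sum_{x\in\mathcal{L}_2}x\in\mathbb{F}_p\mathcal{L}_2$. Then: (1) $\ker\overline{\eta}\subseteq\overline{M_1}$; (2) $\mathbb{F}_p\mathbf{1}\oplus(\operatorname{im}\overline{\phi}+\operatorname{im}\overline{\psi})\subseteq\overline{M_2}$;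 (3) $\mathbb{F}_p\mathbf{1}\oplus\operatorname{im}\overline{\eta}\subseteq\overline{M_3}$; (4) $\mathbb{F}_p\mathbf{1}\subseteq\overline{M_4}$.
   Context: $\mathbb{Z}\mathcal{L}_r$ and $\mathbb{F}_p\mathcal{L}_r$ denote the free $\mathbb{Z}$-module and the $\mathbb{F}_p$-vector space with basis $\mathcal{L}_r$; reduction mod $p$ gives $\mathbb{F}_p\mathcal{L}_r=\mathbb{Z}\mathcal{L}_r/p\mathbb{Z}\mathcal{L}_r$. The direct sums are inside $\mathbb{F}_p\mathcal{L}_2=\mathbb{F}_p\mathbf{1}\oplus Y_2$, where $Y_2$ is the subspace of vectors whose coefficients sum to $0$ (the images of $\overline{\eta},\overline{\phi},\overline{\psi}$ lie in $Y_2$). *)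

(* Defs.v *)
From mathcomp Require Import all_boot all_order all_algebra.
Set Implicit Arguments. Unset Strict Implicit. Unset Printing Implicit Defensive.
Import GRing.Theory.
Local Open Scope ring_scope.

(* V = 'rV['F_p]_4.  A subspace of V is represented by its canonical
   row-space matrix: A : 'M['F_p]_4 with <<A>> = A.  L_r = subspaces of rank r. *)
Definition is_subsp (p r : nat) (A : 'M['F_p]_4) : bool :=
  (<<A>>%MS == A) && (mxrank A == r).

Definition subsp (p r : nat) := {A : 'M['F_p]_4 | is_subsp r A}.

(* R L_r is modelled as {ffun subsp p r -> R} (coefficient functions). *)

Definition meet0 (p r s : nat) (x : subsp p r) (y : subsp p s) : bool :=
  (mxrank (val x :&: val y)%MS == 0%N).

Definition eta (R : pzRingType) (p : nat) (m : {ffun subsp p 2 -> R})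
  : {ffun subsp p 2 -> R} :=
  [ffun y => \sum_(x : subsp p 2 | meet0 x y) m x].

Definition phi (R : pzRingType) (p : nat) (m : {ffun subsp p 1 -> R})
  : {ffun subsp p 2 -> R} :=
  [ffun y => \sum_(x : subsp p 1 | meet0 x y) m x].

(* psi(x) = sum of y in L_2 with x ∩ y <> y (i.e. y not contained in x), x in L_3 *)
Definition psi (R : pzRingType) (p : nat) (m : {ffun subsp p 3 -> R})
  : {ffun subsp p 2 -> R} :=
  [ffun y => \sum_(x : subsp p 3 | ~~ (val y <= val x)%MS) m x].

Definition red (p : nat) (m : {ffun subsp p 2 -> int}) : {ffun subsp p 2 -> 'F_p} :=
  [ffun y => (m y)%:~R].

Definition inM (p i : nat) (m : {ffun subsp p 2 -> int}) : Prop :=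
  forall y, ((p ^ i)%N%:Z %| eta m y)%Z.

(* Mbar_i = (M_i + p Z L_2)/p Z L_2 = image of M_i under reduction mod p *)
Definition inMbar (p i : nat) (v : {ffun subsp p 2 -> 'F_p}) : Prop :=
  exists m, inM i m /\ red m = v.

(* c * 1, where 1 = sum of all x in L_2 is the all-ones vector of F_p L_2 *)
Definition cone2 (p : nat) (c : 'F_p) : {ffun subsp p 2 -> 'F_p} := [ffun _ => c * 1].

(* Main.v *)
Require Import Defs.
From mathcomp Require Import all_boot all_order all_algebra.
From mathcomp Require Import zify ring lra.
Set Implicit Arguments. Unset Strict Implicit. Unset Printing Implicit Defensive.
Import GRing.Theory.
Local Open Scope ring_scope.

Section Counting.
Variable p : nat.
Hypothesis hp : prime p.
Local Notation F := 'F_p.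
Local Notation vec := 'rV[F]_4.

Lemma card_sub m (A : 'M[F]_(m, 4)) :
  #|[set v : vec | (v <= A)%MS]| = (p ^ \rank A)%N.
Proof.
pose f := fun w : 'rV[F]_(\rank A) => w *m row_base A.
have injf : injective f by apply: row_free_inj; exact: row_base_free.
have -> : [set v : vec | (v <= A)%MS] = f @: setT.
  apply/setP => v; rewrite inE; apply/idP/imsetP.
    rewrite -(eq_row_base A) => /submxP [D ->]; by exists D.
  by case=> D _ ->; apply: submx_trans (submxMl _ _) _; rewrite eq_row_base.
by rewrite card_imset // cardsT card_mx card_Fp // mul1n.
Qed.

Lemma rank_addr m (A : 'M[F]_(m, 4)) (u : vec) :
  \rank (A + u)%MS = (\rank A + ~~ (u <= A)%MS)%N.
Proof.
case: (boolP (u <= A)%MS) => h.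
  by rewrite ((addsmx_idPl h) : (A + u :=: A)%MS) addn0.
have u0 : u != 0 by apply: contra h => /eqP ->; exact: sub0mx.
have := mxrank_sum_cap A u; rewrite rank_rV u0.
suff -> : \rank (A :&: u)%MS = 0%N by rewrite addn0.
case: (ltnP (\rank (A :&: u)%MS) (\rank u)) => [|hge].
  by rewrite rank_rV u0 ltnS leqn0 => /eqP.
have e : \rank (A :&: u)%MS == \rank u by rewrite eqn_leq hge mxrankS ?capmxSr.
move: e; rewrite (mxrank_leqif_eq (capmxSr A u)).2 => /andP [_ hu].
by case/negP: h; exact: submx_trans hu (capmxSl A u).
Qed.


Local Notation sv A := [set v : vec | (v <= A)%MS].

Lemma card_vec : #|[set: vec]| = (p ^ 4)%N.
Proof. by rewrite cardsT card_mx card_Fp // mul1n. Qed.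

Lemma svI m1 m2 (A : 'M[F]_(m1, 4)) (B : 'M[F]_(m2, 4)) :
  sv A :&: sv B = sv (A :&: B)%MS.
Proof. by apply/setP => v; rewrite !inE sub_capmx. Qed.

Lemma K2 m1 m2 (A : 'M[F]_(m1, 4)) (B : 'M[F]_(m2, 4)) :
  (#|[set v : vec | (v <= A)%MS && ~~ (v <= B)%MS]| + p ^ \rank (A :&: B)%MS
   = p ^ \rank A)%N.
Proof.
have -> : [set v : vec | (v <= A)%MS && ~~ (v <= B)%MS] = sv A :\: sv B.
  by apply/setP => v; rewrite !inE andbC.
by rewrite -!card_sub -(cardsID (sv B) (sv A)) svI addnC.
Qed.

Lemma K3 m1 m2 (A : 'M[F]_(m1, 4)) (B : 'M[F]_(m2, 4)) :
  (#|[set v : vec | ~~ (v <= A)%MS && ~~ (v <= B)%MS]| + p ^ \rank A + p ^ \rank B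
   = p ^ 4 + p ^ \rank (A :&: B)%MS)%N.
Proof.
have -> : [set v : vec | ~~ (v <= A)%MS && ~~ (v <= B)%MS] = ~: (sv A :|: sv B).
  by apply/setP => v; rewrite !inE negb_or.
rewrite -!card_sub -card_vec cardsT -svI -(cardsC (sv A :|: sv B)).
by rewrite -addnA (addnC #|sv A :|: sv B|) -addnA cardsUI addnA.
Qed.


Definition S (u v : vec) : 'M[F]_4 := <<col_mx u v>>%MS.

Lemma S_eq (u v : vec) : (S u v :=: u + v)%MS.
Proof. by apply: eqmx_trans (genmxE _) _; apply: eqmx_sym; exact: addsmxE. Qed.

Lemma rank_AS m (A : 'M[F]_(m, 4)) u v :
  \rank (A + S u v)%MS = (\rank A + ~~ (u <= A)%MS + ~~ (v <= A + u)%MS)%N.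
Proof.
rewrite (adds_eqmx (eqmx_refl A) (S_eq u v)) addsmxA.
by rewrite rank_addr rank_addr.
Qed.

Lemma rankS u v : \rank (S u v) = ((u != 0%R) + ~~ (v <= u)%MS)%N.
Proof. by rewrite (S_eq u v) rank_addr rank_rV. Qed.

Lemma R1 m (A : 'M[F]_(m, 4)) u v :
  (\rank (S u v) == 2%N) && (\rank (A :&: S u v)%MS == 0%N)
  = ~~ (u <= A)%MS && ~~ (v <= A + u)%MS.
Proof.
have := mxrank_sum_cap A (S u v); rewrite rank_AS rankS.
have h1 : ~~ (u <= A)%MS -> u != 0%R.
  by apply: contraNN => /eqP ->; exact: sub0mx.
have h2 : ~~ (v <= A + u)%MS -> ~~ (v <= u)%MS.
  by apply: contraNN => h; exact: submx_trans h (addsmxSr _ _).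
move: h1 h2.
case: (u <= A)%MS; case: (v <= A + u)%MS; case: (u != 0); case: (v <= u)%MS;
  move=> //= h1 h2; try lia.
Qed.

Lemma R1' m (A : 'M[F]_(m, 4)) u v :
  (\rank (S u v) == 2%N) && (\rank (S u v :&: A)%MS == 0%N)
  = ~~ (u <= A)%MS && ~~ (v <= A + u)%MS.
Proof. by rewrite capmxC R1. Qed.

Lemma Rsub m (X : 'M[F]_(m, 4)) u v : (S u v <= X)%MS = (u <= X)%MS && (v <= X)%MS.
Proof. by rewrite /S genmxE col_mx_sub. Qed.


Lemma K1 m (B : 'M[F]_(m, 4)) :
  (#|[set v : vec | ~~ (v <= B)%MS]| + p ^ \rank B = p ^ 4)%N.
Proof.
have -> : [set v : vec | ~~ (v <= B)%MS] = ~: sv B by apply/setP => v; rewrite !inE.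
by rewrite -card_sub -card_vec cardsT -(cardsC (sv B)) addnC.
Qed.

Lemma sumI (P : pred vec) k :
  (\sum_(u : vec) (P u : nat) * k = #|[set u | P u]| * k)%N.
Proof.
rewrite -big_distrl /=; congr (_ * _)%N.
rewrite -sum1_card [RHS]big_mkcond /=; apply: eq_bigr => u _; rewrite inE; by case: (P u).
Qed.

Lemma L_l m1 m2 m3 (X : 'M[F]_(m1, 4)) (A : 'M[F]_(m2, 4)) (B : 'M[F]_(m3, 4)) :
  (X <= A)%MS -> (X <= A + B)%MS.
Proof. by move=> h; exact: submx_trans h (addsmxSl A B). Qed.
Lemma L_r m1 m2 m3 (X : 'M[F]_(m1, 4)) (A : 'M[F]_(m2, 4)) (B : 'M[F]_(m3, 4)) :
  (X <= B)%MS -> (X <= A + B)%MS.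
Proof. by move=> h; exact: submx_trans h (addsmxSr A B). Qed.
Ltac sm := first [ exact: submx_refl | apply: L_l; sm | apply: L_r; sm ].
Ltac small := rewrite ?addsmx_sub; repeat (apply/andP; split); sm.

Lemma eq_AuBu m1 m2 (A : 'M[F]_(m1, 4)) (B : 'M[F]_(m2, 4)) (u : vec) :
  (A + u + (B + u) :=: A + B + u)%MS.
Proof.
by apply/eqmxP; small.
Qed.

Lemma eq_XBu m1 m2 (X : 'M[F]_(m1, 4)) (B : 'M[F]_(m2, 4)) (u : vec) :
  (u <= X)%MS -> (X + (B + u) :=: X + B)%MS.
Proof.
move=> uX; apply/eqmxP; rewrite ?addsmx_sub; repeat (apply/andP; split); try sm.
exact: L_l.
Qed.


Lemma set0E (T : finType) (P : pred T) : (forall x, P x = false) -> #|[set x | P x]| = 0%N.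
Proof. by move=> h; apply/eqP; rewrite cards_eq0; apply/eqP/setP => x; rewrite !inE h. Qed.

Lemma pt1 m (A : 'M[F]_(m, 4)) (u : vec) :
  #|[set v : vec | ~~ (u <= A)%MS && ~~ (v <= A + u)%MS]|
  = ((~~ (u <= A)%MS : nat) * (p ^ 4 - p ^ (\rank A).+1))%N.
Proof.
case: (boolP (u <= A)%MS) => h /=.
  by rewrite mul0n set0E.
have e := K1 (A + u)%MS; rewrite rank_addr h addn1 in e.
by rewrite mul1n -e addnK.
Qed.

Lemma G1 m (A : 'M[F]_(m, 4)) :
  (\sum_(u : vec) #|[set v : vec | ~~ (u <= A)%MS && ~~ (v <= A + u)%MS]|
   = (p ^ 4 - p ^ \rank A) * (p ^ 4 - p ^ (\rank A).+1))%N.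
Proof.
rewrite (eq_bigr _ (fun u _ => pt1 A u)) sumI; congr (_ * _)%N.
by rewrite -(K1 A) addnK.
Qed.

Lemma pt2 m1 m2 (A : 'M[F]_(m1, 4)) (B : 'M[F]_(m2, 4)) (u : vec) :
  (#|[set v : vec | (~~ (u <= A)%MS && ~~ (u <= B)%MS && ~~ (v <= A + u)%MS && ~~ (v <= B + u)%MS)]|
   + (~~ (u <= A)%MS && ~~ (u <= B)%MS) * (p ^ (\rank A).+1 + p ^ (\rank B).+1)
   = (~~ (u <= A + B)%MS : nat) * (p ^ 4 + p ^ (\rank (A :&: B)%MS).+1)
     + (~~ (u <= A)%MS && ~~ (u <= B)%MS && (u <= A + B)%MS : nat)
        * (p ^ 4 + p ^ (\rank (A :&: B)%MS).+2))%N.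
Proof.
have hAB : ~~ (u <= A + B)%MS -> ~~ (u <= A)%MS && ~~ (u <= B)%MS.
  by move=> h; apply/andP; split; apply: contra h => h; [apply: L_l | apply: L_r].
case: (boolP (~~ (u <= A)%MS && ~~ (u <= B)%MS)) => hu; last first.
  rewrite set0E; last by move=> v; move: hu; case: (u <= A)%MS; case: (u <= B)%MS.
  move: hu; case: (boolP (u <= A + B)%MS) => h2 hu; last by rewrite hAB in hu.
  by [].
have e := K3 (A + u)%MS (B + u)%MS.
have /andP [ha hb] := hu.
rewrite !rank_addr ha hb !addn1 in e.
have ec := mxrank_sum_cap (A + u)%MS (B + u)%MS.
rewrite (eq_AuBu A B u) !rank_addr ha hb !addn1 in ec.
have ec2 := mxrank_sum_cap A B.
have -> : [set v : vec | true && ~~ (v <= A + u)%MS && ~~ (v <= B + u)%MS]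
   = [set v : vec | ~~ (v <= A + u)%MS && ~~ (v <= B + u)%MS].
  by apply/setP => v; rewrite !inE.
rewrite mul1n addnA e.
case: (boolP (u <= A + B)%MS) => h /=; rewrite h /= in ec.
  have -> : \rank ((A + u) :&: (B + u))%MS = (\rank (A :&: B)%MS).+2 by lia.
  by rewrite mul0n add0n mul1n.
have -> : \rank ((A + u) :&: (B + u))%MS = (\rank (A :&: B)%MS).+1 by lia.
by rewrite mul1n mul0n addn0.
Qed.


Lemma G2 m1 m2 (A : 'M[F]_(m1, 4)) (B : 'M[F]_(m2, 4)) :
  (\sum_(u : vec) #|[set v : vec | (~~ (u <= A)%MS && ~~ (u <= B)%MS && ~~ (v <= A + u)%MS && ~~ (v <= B + u)%MS)]|
   + #|[set u : vec | ~~ (u <= A)%MS && ~~ (u <= B)%MS]| * (p ^ (\rank A).+1 + p ^ (\rank B).+1)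
   = #|[set u : vec | ~~ (u <= A + B)%MS]| * (p ^ 4 + p ^ (\rank (A :&: B)%MS).+1)
     + #|[set u : vec | ~~ (u <= A)%MS && ~~ (u <= B)%MS && (u <= A + B)%MS]|
        * (p ^ 4 + p ^ (\rank (A :&: B)%MS).+2))%N.
Proof.
rewrite -!sumI -big_split /= -big_split /=.
by apply: eq_bigr => u _; rewrite pt2.
Qed.

Lemma Npart m1 m2 (A : 'M[F]_(m1, 4)) (B : 'M[F]_(m2, 4)) :
  #|[set u : vec | ~~ (u <= A)%MS && ~~ (u <= B)%MS]|
  = (#|[set u : vec | ~~ (u <= A + B)%MS]|
     + #|[set u : vec | ~~ (u <= A)%MS && ~~ (u <= B)%MS && (u <= A + B)%MS]|)%N.
Proof.
rewrite -(cardsID [set u : vec | (u <= A + B)%MS]) addnC.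
have -> : [set u : vec | ~~ (u <= A)%MS && ~~ (u <= B)%MS] :\: [set u : vec | (u <= A + B)%MS]
  = [set u : vec | ~~ (u <= A + B)%MS].
  apply/setP => u; rewrite !inE.
  case: (boolP (u <= A + B)%MS) => h; rewrite ?andbF ?andbT //=.
  by apply/andP; split; apply: contra h => h; [apply: L_l | apply: L_r].
have -> : [set u : vec | ~~ (u <= A)%MS && ~~ (u <= B)%MS] :&: [set u : vec | (u <= A + B)%MS]
  = [set u : vec | ~~ (u <= A)%MS && ~~ (u <= B)%MS && (u <= A + B)%MS].
  by apply/setP => u; rewrite !inE.
by [].
Qed.

Lemma H2 m1 m2 (X : 'M[F]_(m1, 4)) (B : 'M[F]_(m2, 4)) :
  (\sum_(u : vec) #|[set v : vec | ((u <= X)%MS && ~~ (u <= B)%MS && (v <= X)%MS && ~~ (v <= B + u)%MS)]|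
   = (p ^ \rank X - p ^ \rank (X :&: B)%MS) * (p ^ \rank X - p ^ (\rank (X :&: B)%MS).+1))%N.
Proof.
have pt : forall u : vec,
  #|[set v : vec | ((u <= X)%MS && ~~ (u <= B)%MS && (v <= X)%MS && ~~ (v <= B + u)%MS)]|
  = ((((u <= X)%MS && ~~ (u <= B)%MS) : nat) * (p ^ \rank X - p ^ (\rank (X :&: B)%MS).+1))%N.
  move=> u; case: (boolP ((u <= X)%MS && ~~ (u <= B)%MS)) => h /=; last first.
    by rewrite mul0n set0E // => v; move: h; case: ((u <= X)%MS && ~~ (u <= B)%MS).
  have /andP [hx hb] := h.
  have e := K2 X (B + u)%MS.
  have ec := mxrank_sum_cap X (B + u)%MS.
  rewrite (eq_XBu B hx) rank_addr hb in ec.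
  have ec2 := mxrank_sum_cap X B.
  have er : \rank (X :&: (B + u))%MS = (\rank (X :&: B)%MS).+1 by lia.
  rewrite er in e; rewrite mul1n -e addnK.
  by [].
rewrite (eq_bigr _ (fun u _ => pt u)) sumI; congr (_ * _)%N.
by rewrite -(K2 X B) addnK.
Qed.


Definition N2 := ((p ^ 2 - 1) * (p ^ 2 - p))%N.

Lemma cardP (T : finType) (P : pred T) : #|[set x | P x]| = (\sum_(x : T) (P x : nat))%N.
Proof.
rewrite -sum1_card [LHS]big_mkcond /=; apply: eq_bigr => u _; rewrite inE; by case: (P u).
Qed.

Lemma Sfib (Y : 'M[F]_4) u v : is_subsp 2 Y ->
  (S u v == Y) = ((u <= Y)%MS && ~~ (u <= (0 : 'M[F]_4))%MS && (v <= Y)%MS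
                  && ~~ (v <= (0 : 'M[F]_4) + u)%MS).
Proof.
case/andP => /eqP hY /eqP rY.
have -> : (S u v == Y) = (col_mx u v == Y)%MS.
  by apply/eqP/genmxP; rewrite /S ?hY // => ->.
have -> : (col_mx u v == Y)%MS = (S u v <= Y)%MS && (\rank (S u v) == 2%N).
  case: (boolP (S u v <= Y)%MS) => h.
    have h' : (col_mx u v <= Y)%MS by rewrite -genmxE.
    by rewrite -(mxrank_leqif_eq h').2 rY /S mxrank_gen.
  by apply/negbTE; apply: contra h => /andP [h _]; rewrite genmxE.
have e := R1 (0 : 'M[F]_4) u v.
have z : \rank ((0 : 'M[F]_4) :&: S u v)%MS = 0%N.
  by apply/eqP; rewrite mxrank_eq0 -submx0 capmxSl.
rewrite z eqxx andbT in e; rewrite e Rsub.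
by case: (u <= Y)%MS; case: (v <= Y)%MS; case: (u <= 0)%MS; case: (v <= 0 + u)%MS.
Qed.


Lemma fiber_card (Y : 'M[F]_4) : is_subsp 2 Y ->
  (\sum_(u : vec) #|[set v : vec | S u v == Y]| = N2)%N.
Proof.
move=> hY; have rY : \rank Y = 2%N by case/andP: hY => _ /eqP.
have := H2 Y (0 : 'M[F]_4).
have z : \rank (Y :&: (0 : 'M[F]_4))%MS = 0%N.
  by apply/eqP; rewrite mxrank_eq0 -submx0 capmxSr.
rewrite z rY /N2 => <-; apply: eq_bigr => u _.
by rewrite !cardP; apply: eq_bigr => v _; rewrite Sfib.
Qed.

Lemma sum_y (f : 'M[F]_4 -> bool) u v :
  (\sum_(y : subsp p 2) (f (val y) && (S u v == val y)) : nat)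
  = ((\rank (S u v) == 2%N) && f (S u v) : nat).
Proof.
have iS : is_subsp 2 (S u v) = (\rank (S u v) == 2%N) by rewrite /is_subsp /S genmx_id eqxx.
case: (boolP (is_subsp 2 (S u v))) => h.
  rewrite (bigD1 (exist _ (S u v) h : subsp p 2)) //= eqxx andbT.
  rewrite big1 ?addn0; first by rewrite -iS h.
  move=> y hy; apply/eqP; rewrite eqb0; apply/negP => /andP [_ /eqP e].
  by case/eqP: hy; apply: val_inj.
rewrite big1; first by rewrite -iS (negbTE h).
move=> y _; apply/eqP; rewrite eqb0; apply/negP => /andP [_ /eqP e].
by case/negP: h; rewrite e; exact: (valP y).
Qed.

Lemma fiber (f : 'M[F]_4 -> bool) :
  (\sum_(u : vec) #|[set v : vec | (\rank (S u v) == 2%N) && f (S u v)]|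
   = N2 * #|[set y : subsp p 2 | f (val y)]|)%N.
Proof.
rewrite cardP big_distrr /=.
have -> : (\sum_(y : subsp p 2) N2 * (f (val y) : nat)
          = \sum_(y : subsp p 2) \sum_(u : vec) \sum_(v : vec) (f (val y) && (S u v == val y) : nat))%N.
  apply: eq_bigr => y _; rewrite -(fiber_card (valP y)) big_distrl /=.
  apply: eq_bigr => u _; rewrite cardP big_distrl /=; apply: eq_bigr => v _.
  by case: (f (val y)); case: (S u v == val y).
rewrite exchange_big /=; apply: eq_bigr => u _.
rewrite exchange_big /= cardP; apply: eq_bigr => v _.
by rewrite sum_y.
Qed.


Lemma sumeq (P Q : vec -> vec -> bool) : (forall u v, P u v = Q u v) ->
  (\sum_(u : vec) #|[set v : vec | P u v]| = \sum_(u : vec) #|[set v : vec | Q u v]|)%N.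
Proof. by move=> h; apply: eq_bigr => u _; rewrite !cardP; apply: eq_bigr => v _; rewrite h. Qed.

Lemma rk r (x : subsp p r) : \rank (val x) = r.
Proof. by case: x => X /= /andP [_ /eqP]. Qed.

Lemma p_gt0 : (0 < p)%N. Proof. exact: prime_gt0. Qed.

Lemma zX k : Posz (p ^ k) = (p%:Z) ^+ k.
Proof. by rewrite -natz natrX natz. Qed.

Lemma zB a b : (a <= b)%N -> Posz (p ^ b - p ^ a) = (p%:Z) ^+ b - (p%:Z) ^+ a.
Proof. by move=> h; rewrite -subzn ?leq_pexp2l ?p_gt0 // !zX. Qed.

Lemma N2z : Posz N2 = ((p%:Z) ^+ 2 - 1) * ((p%:Z) ^+ 2 - p%:Z).
Proof.
rewrite /N2 PoszM -!subzn ?zX //.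
  by rewrite -{1}(expn1 p) leq_pexp2l ?p_gt0.
by rewrite expn_gt0 p_gt0.
Qed.

Lemma N2_gt0 : (0 < N2)%N.
Proof.
have p2 := prime_gt1 hp.
rewrite /N2 muln_gt0 !subn_gt0; apply/andP; split.
  by rewrite (leq_trans p2) // -{1}(expn1 p) leq_pexp2l // ltnW.
by rewrite -{1}(expn1 p) ltn_exp2l.
Qed.

Lemma cancelN2 (c k : nat) : (N2 * c = N2 * k)%N -> c = k.
Proof. by move/eqP; rewrite eqn_mul2l (negbTE (lt0n_neq0 N2_gt0)) => /eqP. Qed.

Lemma D1 (y : subsp p 2) : #|[set x : subsp p 2 | meet0 x y]| = (p ^ 4)%N.
Proof.
apply: cancelN2.
have := fiber (fun M => \rank (M :&: val y)%MS == 0%N); rewrite /meet0 => <-.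
rewrite (sumeq (Q := fun u v => ~~ (u <= val y)%MS && ~~ (v <= val y + u)%MS)); last first.
  by move=> u v; rewrite R1'.
rewrite G1 rk.
apply/eqP; rewrite -eqz_nat (PoszM (p ^ 4 - p ^ 2)%N) (PoszM N2) zB // zB // N2z zX.
by apply/eqP; ring.
Qed.


Lemma D1' (x : subsp p 2) : #|[set y : subsp p 2 | meet0 x y]| = (p ^ 4)%N.
Proof.
apply: cancelN2.
have := fiber (fun M => \rank (val x :&: M)%MS == 0%N); rewrite /meet0 => <-.
rewrite (sumeq (Q := fun u v => ~~ (u <= val x)%MS && ~~ (v <= val x + u)%MS)); last first.
  by move=> u v; rewrite R1.
rewrite G1 rk.
apply/eqP; rewrite -eqz_nat (PoszM (p ^ 4 - p ^ 2)%N) (PoszM N2) zB // zB // N2z zX.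
by apply/eqP; ring.
Qed.

Lemma R0 u v : (\rank (S u v) == 2%N) = ~~ (u <= (0 : 'M[F]_4))%MS && ~~ (v <= (0 : 'M[F]_4) + u)%MS.
Proof.
have e := R1 (0 : 'M[F]_4) u v.
have z : \rank ((0 : 'M[F]_4) :&: S u v)%MS = 0%N.
  by apply/eqP; rewrite mxrank_eq0 -submx0 capmxSl.
by rewrite z eqxx andbT in e.
Qed.

Lemma rk0 : \rank (0 : 'M[F]_4) = 0%N. Proof. exact: mxrank0. Qed.

Lemma DL : #|[set y : subsp p 2 | true]| = ((p ^ 2 + 1) * (p ^ 2 + p + 1))%N.
Proof.
apply: cancelN2.
have := fiber (fun M => true) => <-.
rewrite (sumeq (Q := fun u v => ~~ (u <= (0 : 'M[F]_4))%MS && ~~ (v <= (0 : 'M[F]_4) + u)%MS)); last first.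
  by move=> u v; rewrite andbT R0.
rewrite G1 rk0.
apply/eqP; rewrite -eqz_nat (PoszM (p ^ 4 - p ^ 0)%N) (PoszM N2) zB // zB // N2z.
rewrite PoszM !PoszD !zX; by apply/eqP; ring.
Qed.

Lemma DL_ndvd : ~~ (p %| #|[set y : subsp p 2 | true]|)%N.
Proof.
rewrite DL.
have -> : ((p ^ 2 + 1) * (p ^ 2 + p + 1) = p * (p ^ 3 + p ^ 2 + 2 * p + 1) + 1)%N by ring.
rewrite dvdn_addr ?dvdn_mulr // dvdn1; have := prime_gt1 hp; lia.
Qed.


Lemma D2 (x : subsp p 1) : #|[set y : subsp p 2 | meet0 x y]| = (p ^ 2 * (p ^ 2 + p + 1))%N.
Proof.
apply: cancelN2.
have := fiber (fun M => \rank (val x :&: M)%MS == 0%N); rewrite /meet0 => <-.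
rewrite (sumeq (Q := fun u v => ~~ (u <= val x)%MS && ~~ (v <= val x + u)%MS)); last first.
  by move=> u v; rewrite R1.
rewrite G1 rk.
apply/eqP; rewrite -eqz_nat (PoszM (p ^ 4 - p ^ 1)%N) (PoszM N2) zB // zB // N2z.
rewrite PoszM !PoszD !zX; by apply/eqP; ring.
Qed.

Lemma Dsub (x : subsp p 3) : #|[set y : subsp p 2 | (val y <= val x)%MS]| = (p ^ 2 + p + 1)%N.
Proof.
apply: cancelN2.
have := fiber (fun M => (M <= val x)%MS) => <-.
rewrite (sumeq (Q := fun u v => (u <= val x)%MS && ~~ (u <= (0 : 'M[F]_4))%MS
        && (v <= val x)%MS && ~~ (v <= (0 : 'M[F]_4) + u)%MS)); last first.
  move=> u v; rewrite R0 Rsub.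
  by case: (u <= val x)%MS; case: (v <= val x)%MS; case: (u <= 0)%MS; case: (v <= 0 + u)%MS.
rewrite H2 rk.
have -> : \rank (val x :&: (0 : 'M[F]_4))%MS = 0%N.
  by apply/eqP; rewrite mxrank_eq0 -submx0 capmxSr.
apply/eqP; rewrite -eqz_nat (PoszM (p ^ 3 - p ^ 0)%N) (PoszM N2) zB // zB // N2z.
rewrite !PoszD !zX; by apply/eqP; ring.
Qed.

Lemma cardsplit (T : finType) (P Q : pred T) :
  (#|[set y | P y && Q y]| + #|[set y | ~~ P y && Q y]| = #|[set y | Q y]|)%N.
Proof.
rewrite !cardP -big_split /=; apply: eq_bigr => y _.
by case: (P y); case: (Q y).
Qed.

Lemma D3 (x : subsp p 3) : #|[set y : subsp p 2 | ~~ (val y <= val x)%MS]| = (p ^ 2 * (p ^ 2 + p + 1))%N.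
Proof.
have e := cardsplit (fun y : subsp p 2 => (val y <= val x)%MS) (fun _ => true).
have e1 : #|[set y : subsp p 2 | (val y <= val x)%MS && true]| = (p ^ 2 + p + 1)%N.
  by rewrite -(Dsub x) !cardP; apply: eq_bigr => y _; rewrite andbT.
have e2 : #|[set y : subsp p 2 | ~~ (val y <= val x)%MS && true]|
          = #|[set y : subsp p 2 | ~~ (val y <= val x)%MS]|.
  by rewrite !cardP; apply: eq_bigr => y _; rewrite andbT.
rewrite e1 e2 DL in e.
apply/eqP; rewrite -(eqn_add2l (p ^ 2 + p + 1)) e; apply/eqP; ring.
Qed.


Ltac toZ e := have := congr1 (fun n : nat => (n%:R : int)) e; rewrite /= ?natrX ?natrD ?natrM.

Lemma G2z m1 m2 (A : 'M[F]_(m1, 4)) (B : 'M[F]_(m2, 4)) :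
  ((\sum_(u : vec) #|[set v : vec | (~~ (u <= A)%MS && ~~ (u <= B)%MS && ~~ (v <= A + u)%MS && ~~ (v <= B + u)%MS)]|)%N%:R : int)
  = ((p%:R : int) ^+ 4 - (p%:R : int) ^+ (\rank (A + B)%MS)) * ((p%:R : int) ^+ 4 + (p%:R : int) ^+ (\rank (A :&: B)%MS).+1)
    + (((p%:R : int) ^+ 4 + (p%:R : int) ^+ (\rank (A :&: B)%MS) - (p%:R : int) ^+ (\rank A) - (p%:R : int) ^+ (\rank B))
       - ((p%:R : int) ^+ 4 - (p%:R : int) ^+ (\rank (A + B)%MS))) * ((p%:R : int) ^+ 4 + (p%:R : int) ^+ (\rank (A :&: B)%MS).+2)
    - ((p%:R : int) ^+ 4 + (p%:R : int) ^+ (\rank (A :&: B)%MS) - (p%:R : int) ^+ (\rank A) - (p%:R : int) ^+ (\rank B))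
       * ((p%:R : int) ^+ (\rank A).+1 + (p%:R : int) ^+ (\rank B).+1).
Proof.
have eG := G2 A B; have eK3 := K3 A B; have eK1 := K1 (A + B)%MS; have eNp := Npart A B.
set T := (\sum_(u : vec) _)%N in eG *.
set N := #|[set u : vec | ~~ (u <= A)%MS && ~~ (u <= B)%MS]| in eG eK3 eNp.
set E := #|[set u : vec | ~~ (u <= A + B)%MS]| in eG eK1 eNp.
set N' := #|[set u : vec | _ && _ && (u <= A + B)%MS]| in eG eNp.
clearbody T N E N'.
toZ eG; toZ eK3; toZ eK1; toZ eNp.
move=> hNp hK1 hK3 hG.
set P := (p%:R : int) in hNp hK1 hK3 hG *.
move: hNp hK1 hK3 hG; move: (\rank A) (\rank B) (\rank (A :&: B)%MS) (\rank (A + B)%MS) => a b c s.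
move=> hNp hK1 hK3 hG.
have hE : (E%:R : int) = P ^+ 4 - P ^+ s.
  by apply: (addIr (P ^+ s)); rewrite hK1 !exprS; ring.
have hN : (N%:R : int) = P ^+ 4 + P ^+ c - P ^+ a - P ^+ b.
  by apply: (addIr (P ^+ a + P ^+ b)); rewrite addrA hK3 !exprS; ring.
have hN' : (N'%:R : int) = N%:R - E%:R by rewrite hNp; ring.
have hT : (T%:R : int) = E%:R * (P ^+ 4 + P ^+ c.+1)
   + N'%:R * (P ^+ 4 + P ^+ c.+2)
   - N%:R * (P ^+ a.+1 + P ^+ b.+1).
  apply: (addIr (N%:R * (P ^+ a.+1 + P ^+ b.+1))); rewrite hG.
  rewrite !exprS; ring.
by rewrite hT hN' hN hE.
Qed.


Lemma N2R : (N2%:R : int) = ((p%:R : int) ^+ 2 - 1) * ((p%:R : int) ^+ 2 - p%:R).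
Proof.
rewrite /N2 natrM !natrB ?natrX //.
  by rewrite -{1}(expn1 p) leq_pexp2l ?p_gt0.
by rewrite expn_gt0 p_gt0.
Qed.

Lemma fromZ (c k T : nat) : (N2 * c = T)%N -> (T%:R : int) = (N2%:R : int) * k%:R -> c = k.
Proof.
move=> e1 e2; apply: cancelN2; apply/eqP; by rewrite -(@Num.Theory.eqr_nat int) e1 e2 natrM.
Qed.

Lemma boolsplit (r a b : bool) : r && (a && b) = (r && a) && (r && b).
Proof. by case: r; case: a; case: b. Qed.

Lemma pair2 (W Y : 'M[F]_4) u v :
  (\rank (S u v) == 2%N) && ((\rank (W :&: S u v)%MS == 0%N) && (\rank (S u v :&: Y)%MS == 0%N))
  = (~~ (u <= W)%MS && ~~ (u <= Y)%MS && ~~ (v <= W + u)%MS && ~~ (v <= Y + u)%MS).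
Proof.
rewrite boolsplit R1 R1'.
by case: (u <= W)%MS; case: (u <= Y)%MS; case: (v <= W + u)%MS; case: (v <= Y + u)%MS.
Qed.

Lemma cnt2 r1 (w : subsp p r1) (y : subsp p 2) :
  (N2 * #|[set x : subsp p 2 | meet0 w x && meet0 x y]|
   = \sum_(u : vec) #|[set v : vec | (~~ (u <= val w)%MS && ~~ (u <= val y)%MS
        && ~~ (v <= val w + u)%MS && ~~ (v <= val y + u)%MS)]|)%N.
Proof.
have := fiber (fun M => (\rank (val w :&: M)%MS == 0%N) && (\rank (M :&: val y)%MS == 0%N)).
rewrite /meet0 => <-; apply: sumeq => u v; exact: pair2.
Qed.

Lemma D4 (w : subsp p 1) (y : subsp p 2) :
  (p ^ 2 %| #|[set x : subsp p 2 | meet0 w x && meet0 x y]|)%N.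
Proof.
have e := cnt2 w y.
have ez := G2z (val w) (val y).
have hs := mxrank_sum_cap (val w) (val y).
have hc : (\rank (val w :&: val y)%MS <= 1)%N.
  by have := mxrankS (capmxSl (val w) (val y)); rewrite rk.
rewrite !rk in hs ez.
move: hs hc ez; move: (\rank (val w :&: val y)%MS) (\rank (val w + val y)%MS) => c s.
case: c => [|[|c]] // hs _ ez.
  have hs3 : s = 3%N by lia.
  rewrite hs3 in ez.
  rewrite (fromZ (k := (p ^ 4 - p ^ 2)%N) e).
    by rewrite dvdn_sub // dvdn_exp2l.
  rewrite ez N2R natrB ?leq_pexp2l ?p_gt0 // !natrX; ring.
have hs2 : s = 2%N by lia.
rewrite hs2 in ez.
rewrite (fromZ (k := (p ^ 4)%N) e).
  by rewrite dvdn_exp2l.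
rewrite ez N2R !natrX; ring.
Qed.


Lemma D5 (w : subsp p 3) (y : subsp p 2) :
  (p ^ 2 %| #|[set x : subsp p 2 | ~~ (val x <= val w)%MS && meet0 x y]|)%N.
Proof.
have e := cardsplit (fun x : subsp p 2 => (val x <= val w)%MS) (fun x => meet0 x y).
rewrite D1 in e.
have e2 : (N2 * #|[set x : subsp p 2 | (val x <= val w)%MS && meet0 x y]|
   = \sum_(u : vec) #|[set v : vec | ((u <= val w)%MS && ~~ (u <= val y)%MS
        && (v <= val w)%MS && ~~ (v <= val y + u)%MS)]|)%N.
  have := fiber (fun M => (M <= val w)%MS && (\rank (M :&: val y)%MS == 0%N)).
  rewrite /meet0 => <-; apply: sumeq => u v.
  have -> : (\rank (S u v) == 2%N) && ((S u v <= val w)%MS && (\rank (S u v :&: val y)%MS == 0%N))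
    = (S u v <= val w)%MS && ((\rank (S u v) == 2%N) && (\rank (S u v :&: val y)%MS == 0%N)).
    by case: (\rank (S u v) == 2%N); case: (S u v <= val w)%MS.
  rewrite R1' Rsub.
  by case: (u <= val w)%MS; case: (u <= val y)%MS; case: (v <= val w)%MS; case: (v <= val y + u)%MS.
rewrite H2 rk in e2.
have hs := mxrank_sum_cap (val w) (val y).
have hc : (\rank (val w :&: val y)%MS <= 2)%N.
  by have := mxrankS (capmxSr (val w) (val y)); rewrite rk.
have hs4 : (\rank (val w + val y)%MS <= 4)%N by exact: rank_leq_col.
rewrite !rk in hs.
move: hs hc hs4 e2; move: (\rank (val w :&: val y)%MS) (\rank (val w + val y)%MS) => c s.
case: c => [|[|[|c]]] // hs _ hs4 e2; first by lia.
  have h1 : #|[set x : subsp p 2 | (val x <= val w)%MS && meet0 x y]| = (p ^ 2)%N.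
    apply: (fromZ e2); rewrite N2R natrM !natrB ?leq_pexp2l ?p_gt0 // !natrX; ring.
  rewrite h1 in e.
  have -> : #|[set x : subsp p 2 | ~~ (val x <= val w)%MS && meet0 x y]| = (p ^ 4 - p ^ 2)%N.
    by rewrite -e addKn.
  by rewrite dvdn_sub // dvdn_exp2l.
have h1 : #|[set x : subsp p 2 | (val x <= val w)%MS && meet0 x y]| = 0%N.
  apply: (fromZ e2); rewrite subnn muln0 N2R; ring.
rewrite h1 in e.
by rewrite add0n in e; rewrite e dvdn_exp2l.
Qed.


Lemma fromZ' (c T : nat) (K : int) : (N2 * c = T)%N -> (T%:R : int) = (N2%:R : int) * K -> (c%:R : int) = K.
Proof.
move=> e1 e2; apply: (mulfI (x := (N2%:R : int))).
  by rewrite Num.Theory.pnatr_eq0 -lt0n N2_gt0.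
by rewrite -natrM e1 e2.
Qed.

Lemma D6 (x y : subsp p 2) :
  ((p%:Z) ^+ 3 %| (#|[set x' : subsp p 2 | meet0 x x' && meet0 x' y]|)%:Z
      - ((p%:Z) - (p%:Z) ^+ 2) * ((meet0 x y : nat) %:Z))%Z.
Proof.
have e := cnt2 x y.
have ez := G2z (val x) (val y).
have hs := mxrank_sum_cap (val x) (val y).
have hc : (\rank (val x :&: val y)%MS <= 2)%N.
  by have := mxrankS (capmxSr (val x) (val y)); rewrite rk.
rewrite !rk in hs ez.
rewrite -!natz.
move: e; set cnt := #|[set x' : subsp p 2 | _]| => e.
rewrite /meet0.
move: hs hc ez; move: (\rank (val x :&: val y)%MS) (\rank (val x + val y)%MS) => c s.
case: c => [|[|[|c]]] // hs _ ez.
- have hs4 : s = 4%N by lia.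
  rewrite hs4 in ez.
  rewrite (fromZ' (K := (p%:R : int) ^+ 4 - (p%:R) ^+ 3 - (p%:R) ^+ 2 + p%:R) e); last first.
    by rewrite ez N2R; ring.
  apply/dvdzP; exists ((p%:R : int) - 1); rewrite /=; ring.
- have hs3 : s = 3%N by lia.
  rewrite hs3 in ez.
  rewrite (fromZ' (K := (p%:R : int) ^+ 4 - (p%:R) ^+ 3) e); last first.
    by rewrite ez N2R; ring.
  apply/dvdzP; exists ((p%:R : int) - 1); rewrite /=; ring.
- have hs2 : s = 2%N by lia.
  rewrite hs2 in ez.
  rewrite (fromZ' (K := (p%:R : int) ^+ 4) e); last first.
    by rewrite ez N2R; ring.
  apply/dvdzP; exists (p%:R : int); rewrite /=; ring.
Qed.

End Counting.

Definition liftF (p : nat) (T : finType) (f : {ffun T -> 'F_p}) : {ffun T -> int} :=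
  [ffun x => Posz (f x)].

Lemma lift_red (p : nat) (a : 'F_p) : ((Posz a)%:~R : 'F_p) = a.
Proof. by rewrite -natz mulrz_nat natr_Zp. Qed.

Lemma sum_cnt (R : zmodType) (J : finType) (Q : pred J) (k : R) :
  \sum_(j | Q j) k = k *+ #|[set j | Q j]|.
Proof.
rewrite cardP big_mkcond /= -sumrMnr; apply: eq_bigr => j _.
by case: (Q j).
Qed.

Lemma sum_exch (R : zmodType) (I J : finType) (P : pred J) (Q : I -> J -> bool) (g : I -> R) :
  \sum_(j | P j) \sum_(i | Q i j) g i = \sum_(i : I) g i *+ #|[set j | Q i j && P j]|.
Proof.
rewrite big_mkcond /=.
rewrite (eq_bigr (fun j => \sum_(i : I) (if P j && Q i j then g i else 0))); last first.
  move=> j _; case: (P j); last by rewrite big1.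
  by rewrite big_mkcond.
rewrite exchange_big /=; apply: eq_bigr => i _.
rewrite cardP -sumrMnr; apply: eq_bigr => j _.
by case: (P j); case: (Q i j).
Qed.

Lemma dvdz_sum (I : finType) (P : pred I) (d : int) (F : I -> int) :
  (forall i, P i -> (d %| F i)%Z) -> (d %| \sum_(i | P i) F i)%Z.
Proof.
move=> h; apply: (big_ind (fun x => (d %| x)%Z)).
- exact: dvdz0.
- by move=> x y hx hy; rewrite rpredD.
- exact: h.
Qed.

Lemma dvdz_mn (g : int) (n k : nat) (p : nat) : (p ^ k %| n)%N -> (Posz (p ^ k) %| g *+ n)%Z.
Proof.
move=> h; rewrite -mulr_natr natz; apply: dvdz_mull; by rewrite dvdzE.
Qed.

Lemma Fp_dvd (p : nat) (hp : prime p) (n : nat) (a : 'F_p) : (p %| n)%N -> a *+ n = 0.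
Proof.
move=> h; rewrite -mulr_natr.
have -> : (n%:R : 'F_p) = 0 by apply/eqP; rewrite -(dvdn_pcharf (pchar_Fp hp)).
by rewrite mulr0.
Qed.

Lemma ffun0A (T : finType) (R : nmodType) (x : T) : (0 : {ffun T -> R}) x = 0.
Proof. exact: ffunE. Qed.
Lemma ffunDA (T : finType) (R : nmodType) (f g : {ffun T -> R}) (x : T) : (f + g) x = f x + g x.
Proof. exact: ffunE. Qed.

Lemma card_andT (T : finType) (P : pred T) : #|[set j | P j && true]| = #|[set j | P j]|.
Proof. by rewrite !cardP; apply: eq_bigr => j _; rewrite andbT. Qed.

Unset Implicit Arguments.
Theorem lemma3 (p : nat) (hp : prime p) :
  (* (1) ker etabar ⊆ Mbar_1 *)
  (forall v : {ffun subsp p 2 -> 'F_p}, eta v = 0 -> inMbar 1 v) /\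
  (* (2) F_p 1 ⊕ (im phibar + im psibar) ⊆ Mbar_2 : the sum is direct and contained *)
  ((forall (c : 'F_p) (a : {ffun subsp p 1 -> 'F_p}) (b : {ffun subsp p 3 -> 'F_p}),
      cone2 c = phi a + psi b -> c = 0) /\
   (forall (c : 'F_p) (a : {ffun subsp p 1 -> 'F_p}) (b : {ffun subsp p 3 -> 'F_p}),
      inMbar 2 (cone2 c + (phi a + psi b)))) /\
  (* (3) F_p 1 ⊕ im etabar ⊆ Mbar_3 *)
  ((forall (c : 'F_p) (w : {ffun subsp p 2 -> 'F_p}),
      cone2 c = eta w -> c = 0) /\
   (forall (c : 'F_p) (w : {ffun subsp p 2 -> 'F_p}),
      inMbar 3 (cone2 c + eta w))) /\
  (* (4) F_p 1 ⊆ Mbar_4 *)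
  (forall c : 'F_p, inMbar 4 (cone2 c)).
Proof.
have etaE : forall (R : pzRingType) (m : {ffun subsp p 2 -> R}) y,
    eta m y = \sum_(x | meet0 x y) m x by move=> R m y; rewrite /eta ffunE.
have phiE : forall (R : pzRingType) (m : {ffun subsp p 1 -> R}) y,
    phi m y = \sum_(x | meet0 x y) m x by move=> R m y; rewrite /phi ffunE.
have psiE : forall (R : pzRingType) (m : {ffun subsp p 3 -> R}) y,
    psi m y = \sum_(x | ~~ (val y <= val x)%MS) m x by move=> R m y; rewrite /psi ffunE.
have redE : forall (m : {ffun subsp p 2 -> int}) y, red m y = (m y)%:~R by move=> m y; rewrite /red ffunE.
have liftE : forall (T : finType) (f : {ffun T -> 'F_p}) x, liftF f x = Posz (f x).
  by move=> T f x; rewrite /liftF ffunE.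
have redsum : forall (T : finType) (P : pred T) (F : T -> int),
    ((\sum_(x | P x) F x)%:~R : 'F_p) = \sum_(x | P x) (F x)%:~R.
  by move=> T P F; rewrite mulrz_sumr.
have Lnz : (#|[set y : subsp p 2 | true]|%:R : 'F_p) != 0.
  by rewrite -(dvdn_pcharf (pchar_Fp hp)) DL_ndvd.
have sumall : forall (f : {ffun subsp p 2 -> 'F_p}), \sum_(y : subsp p 2) f y = \sum_(y | true) f y by [].
split.
  move=> v ev; exists (liftF v); split.
    move=> y; rewrite expn1 (dvdz_pcharf (pchar_Fp hp)) etaE redsum.
    under eq_bigr do rewrite liftE lift_red.
    by rewrite -etaE ev ffun0A.
  by apply/ffunP => y; rewrite redE liftE lift_red.
split; [split|].
  move=> c a b E.
  have := congr1 (fun f : {ffun subsp p 2 -> 'F_p} => \sum_(y : subsp p 2) f y) E => /=.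
  rewrite [LHS](eq_bigr (fun _ => c * 1)); last by move=> y _; rewrite /cone2 ffunE.
  rewrite [RHS](eq_bigr (fun y => phi a y + psi b y)); last by move=> y _; rewrite ffunDA.
  rewrite big_split /=.
  rewrite [X in _ = X + _](eq_bigr (fun y => \sum_(x | meet0 x y) a x)); last by move=> y _; rewrite phiE.
  rewrite [X in _ = _ + X](eq_bigr (fun y => \sum_(x | ~~ (val y <= val x)%MS) b x)); last by move=> y _; rewrite psiE.
  rewrite !sum_exch sum_cnt.
  rewrite big1; last by move=> x _; apply: Fp_dvd => //; rewrite card_andT D2 // dvdn_mulr // dvdn_exp.
  rewrite big1; last first.
    move=> x _; apply: Fp_dvd => //.
    by rewrite (card_andT (fun j : subsp p 2 => ~~ (val j <= val x)%MS)) D3 // dvdn_mulr // dvdn_exp.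
  rewrite addr0 mulr1 -mulr_natr => /eqP; rewrite mulf_eq0 (negbTE Lnz) orbF.
  by move/eqP.
  move=> c a b.
  exists [ffun y => Posz c + (phi (liftF a) y + psi (liftF b) y)]; split.
    move=> y; rewrite etaE.
    rewrite (eq_bigr (fun x => Posz c + (phi (liftF a) x + psi (liftF b) x))); last by move=> x _; rewrite ffunE.
    rewrite !big_split /=.
    apply: rpredD; [| apply: rpredD].
    - by rewrite sum_cnt D1 // dvdz_mn // dvdn_exp2l.
    - rewrite (eq_bigr (fun x => \sum_(w | meet0 w x) liftF a w)); last by move=> x _; rewrite phiE.
      rewrite sum_exch; apply: dvdz_sum => w _; apply: dvdz_mn; exact: D4.
    - rewrite (eq_bigr (fun x => \sum_(w | ~~ (val x <= val w)%MS) liftF b w)); last by move=> x _; rewrite psiE.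
      rewrite sum_exch; apply: dvdz_sum => w _; apply: dvdz_mn; exact: D5.
  apply/ffunP => y; rewrite redE ffunE !ffunDA !intrD lift_red.
  rewrite phiE phiE psiE psiE !redsum /cone2 ffunE mulr1.
  by congr (_ + (_ + _)); apply: eq_bigr => x _; rewrite liftE lift_red.
split; [split|].
  move=> c w E.
  have := congr1 (fun f : {ffun subsp p 2 -> 'F_p} => \sum_(y : subsp p 2) f y) E => /=.
  rewrite [LHS](eq_bigr (fun _ => c * 1)); last by move=> y _; rewrite /cone2 ffunE.
  rewrite [RHS](eq_bigr (fun y => \sum_(x | meet0 x y) w x)); last by move=> y _; rewrite etaE.
  rewrite sum_exch sum_cnt.
  rewrite big1; last by move=> x _; apply: Fp_dvd => //; rewrite card_andT D1' // dvdn_exp.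
  rewrite mulr1 -mulr_natr => /eqP; rewrite mulf_eq0 (negbTE Lnz) orbF.
  by move/eqP.
  move=> c w.
  pose K : int := Posz p - Posz p ^+ 2.
  exists [ffun y => Posz c + (eta (liftF w) y - K * liftF w y)]; split.
    move=> y; rewrite etaE.
    rewrite (eq_bigr (fun x => Posz c + (eta (liftF w) x - K * liftF w x))); last by move=> x _; rewrite ffunE.
    rewrite big_split /= sumrB.
    apply: rpredD.
      by rewrite sum_cnt D1 // dvdz_mn // dvdn_exp2l.
    have e1 : \sum_(x | meet0 x y) eta (liftF w) x
        = \sum_(u : subsp p 2) liftF w u * Posz #|[set x : subsp p 2 | meet0 u x && meet0 x y]|.
      rewrite (eq_bigr (fun x => \sum_(u | meet0 u x) liftF w u)); last by move=> x _; rewrite etaE.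
      by rewrite sum_exch; apply: eq_bigr => u _; rewrite -mulr_natr natz.
    have e2 : \sum_(x | meet0 x y) K * liftF w x
        = \sum_(u : subsp p 2) liftF w u * (K * Posz (meet0 u y)).
      rewrite big_mkcond; apply: eq_bigr => u _ /=.
      by case: (meet0 u y); rewrite ?mulr1 ?mulr0 // mulrC.
    rewrite e1 e2 -sumrB; apply: dvdz_sum => u _; rewrite -mulrBr; apply: dvdz_mull.
    by rewrite zX; exact: D6.
  have K0 : (K%:~R : 'F_p) = 0.
    have -> : K = Posz p * (1 - Posz p) by rewrite /K; ring.
    by rewrite intrM -natz mulrz_nat (pchar_Fp_0 hp) mul0r.
  apply/ffunP => y; rewrite redE ffunE ffunDA intrD lift_red intrB intrM K0 mul0r subr0.
  rewrite etaE etaE redsum /cone2 ffunE mulr1.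
  by congr (_ + _); apply: eq_bigr => x _; rewrite liftE lift_red.
move=> c; exists [ffun _ => Posz c]; split.
  move=> y; rewrite etaE (eq_bigr (fun _ => Posz c)); last by move=> x _; rewrite ffunE.
  by rewrite sum_cnt D1 // dvdz_mn // dvdn_exp2l.
by apply/ffunP => y; rewrite redE !ffunE lift_red mulr1.
Qed.
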